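(* The probability that a uniformly random sequence $B\in\{x,o\}^w$ is $x$-promoting is $\Omega(1)$, i.e. bounded below by a positive constant independent of $w$.
   Context: Associate $+1$ to $x$ and $-1$ to $o$. For $B\in\{x,o\}^w$ and $0\le j\le w$, let $\chi_j(B)$ be the sum of the first $j$ signs of $B$, $\chi(B)=\chi_w(B)$ the sum of all signs, and $\chi_{-j}(B)=\chi(B)-\chi_{w-j}(B)$ the sum of the last $j$ signs. $B$ is $x$-promoting if $\chi(B)\ge 5\sqrt w$ and for all $j=1,\dots,w$, $\chi_j(B)>-2\sqrt w$ and $\chi_{-j}(B)>-2\sqrt w$. *)

(* Defs.v *)
From mathcomp Require Import all_boot all_order all_algebra.
From mathcomp Require Import reals.
Set Implicit Arguments. Unset Strict Implicit. Unset Printing Implicit Defensive.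
Import Order.TTheory GRing.Theory Num.Theory.
Local Open Scope ring_scope.

(* A sequence B in {x,o}^w is a finite function 'I_w -> bool,
   with true = x (sign +1) and false = o (sign -1). *)
Definition sgn (b : bool) : int := if b then 1 else -1.

Definition chi_pre (w : nat) (B : {ffun 'I_w -> bool}) (j : nat) : int :=
  \sum_(i < w | (i < j)%N) sgn (B i).

Definition chi (w : nat) (B : {ffun 'I_w -> bool}) : int := chi_pre B w.

Definition chi_suf (w : nat) (B : {ffun 'I_w -> bool}) (j : nat) : int :=
  chi B - chi_pre B (w - j).

Definition x_promoting (R : realType) (w : nat) (B : {ffun 'I_w -> bool}) : bool :=
  (5 * Num.sqrt (w%:R : R) <= (chi B)%:~R) &&
  [forall j : 'I_w.+1, (0 < (j : nat))%N ==>
     ((- (2 * Num.sqrt (w%:R : R)) < (chi_pre B j)%:~R) &&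
      (- (2 * Num.sqrt (w%:R : R)) < (chi_suf B j)%:~R))].

Definition prob_x_promoting (R : realType) (w : nat) : R :=
  #|[set B : {ffun 'I_w -> bool} | x_promoting R B]|%:R / (2 ^ w)%:R.

(* Main.v *)
Require Import Defs.
From mathcomp Require Import all_boot all_order all_algebra.
From mathcomp Require Import reals.
From mathcomp Require Import ring lra zify.
Import Order.TTheory GRing.Theory Num.Theory.
Set Implicit Arguments. Unset Strict Implicit. Unset Printing Implicit Defensive.

Fixpoint allseqs (n : nat) : seq (seq bool) :=
  if n is n'.+1 then map (cons true) (allseqs n') ++ map (cons false) (allseqs n')
  else [:: [::]].

Lemma cons_inj (b : bool) : injective (cons b).
Proof. by move=> x y [].
Qed.

Lemma mem_allseqs n s : (s \in allseqs n) = (size s == n).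
Proof.
elim: n s => [|n IH] [|b s] //=; rewrite mem_cat.
- by apply/negbTE/norP; split; apply/mapP => [[x _]].
- rewrite eqSS -IH; case: b.
  + rewrite (mem_map (@cons_inj true)); apply/orP/idP; first by case=> // /mapP [x _].
    by left.
  + rewrite (mem_map (@cons_inj false)); apply/orP/idP; first by case=> // /mapP [x _].
    by right.
Qed.

Lemma uniq_allseqs n : uniq (allseqs n).
Proof.
elim: n => [|n IH] //=; rewrite cat_uniq !map_inj_uniq //; try exact: cons_inj.
rewrite IH andbT /=; apply/hasPn => s /mapP [x _ ->]; apply/mapP => [[y _]] //.
Qed.

Section Sums.
Variables (T : Type) (idx : T) (op : Monoid.com_law idx).

Lemma big_allseqsS n (F : seq bool -> T) :
  \big[op/idx]_(s <- allseqs n.+1) F s =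
  op (\big[op/idx]_(s <- allseqs n) F (true :: s))
     (\big[op/idx]_(s <- allseqs n) F (false :: s)).
Proof. by rewrite /= big_cat !big_map. Qed.

Lemma big_allseqs_neg n (F : seq bool -> T) :
  \big[op/idx]_(s <- allseqs n) F s = \big[op/idx]_(s <- allseqs n) F (map negb s).
Proof.
elim: n F => [|n IH] F; first by rewrite /= !big_cons !big_nil.
rewrite !big_allseqsS (IH (fun s => F (true :: s))) (IH (fun s => F (false :: s))).
by rewrite Monoid.mulmC.
Qed.
End Sums.

Definition cnt n (P : pred (seq bool)) : nat := \sum_(s <- allseqs n) P s.

Lemma cnt_prod n m k (P1 P2 P : pred (seq bool)) :
  k = (n + m)%N -> (forall a b, P1 a -> P2 b -> P (a ++ b)) ->
  (cnt n P1 * cnt m P2 <= cnt k P)%N.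
Proof.
move=> -> ; elim: n P1 P => [|n IH] P1 P H.
  rewrite /cnt /= big_cons big_nil addn0.
  case h: (P1 [::]); last by rewrite mul0n.
  rewrite mul1n add0n; apply: leq_sum => s _; case h2: (P2 s) => //.
  by have /= -> := H _ _ h h2.
rewrite /cnt addSn !big_allseqsS mulnDl; apply: leq_add.
  by apply: (IH (fun s => P1 (true :: s)) (fun s => P (true :: s))) => a b ha hb; apply: (H (true :: a)).
by apply: (IH (fun s => P1 (false :: s)) (fun s => P (false :: s))) => a b ha hb; apply: (H (false :: a)).
Qed.

Definition gseq w (s : seq bool) : {ffun 'I_w -> bool} := [ffun i : 'I_w => nth false s i].

Lemma card_bridge w (P : pred {ffun 'I_w -> bool}) :
  #|[set B | P B]| = cnt w (fun s => P (gseq w s)).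
Proof.
rewrite /cnt -(big_map (@gseq w) xpredT (fun B => (P B : nat))).
have pe : perm_eq (map (@gseq w) (allseqs w)) (enum {ffun 'I_w -> bool}).
  apply: uniq_perm; last first.
  - move=> B; rewrite mem_enum; apply/mapP; exists [seq B i | i <- enum 'I_w].
      by rewrite mem_allseqs size_map size_enum_ord.
    apply/ffunP => i; rewrite ffunE (nth_map i); last by rewrite size_enum_ord.
    by rewrite nth_ord_enum.
  - exact: enum_uniq.
  rewrite map_inj_in_uniq ?uniq_allseqs // => s1 s2.
  rewrite !mem_allseqs => /eqP h1 /eqP h2 e; apply: (@eq_from_nth _ false); first by rewrite h1 h2.
  move=> i; rewrite h1 => hi.
  by have := congr1 (fun f : {ffun 'I_w -> bool} => f (Ordinal hi)) e; rewrite !ffunE.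
rewrite (perm_big _ pe) big_enum /= -sum1_card big_mkcond /=.
by apply: eq_bigr => B _; rewrite inE.
Qed.

Local Open Scope ring_scope.

Section Walk.
Variable R : realType.

Definition SR (s : seq bool) : R := (\sum_(x <- s) sgn x)%:~R.

Lemma SR_nil : SR [::] = 0.
Proof. by rewrite /SR big_nil. Qed.

Lemma SR_cons b s : SR (b :: s) = (sgn b)%:~R + SR s.
Proof. by rewrite /SR big_cons intrD. Qed.

Lemma SR_true s : SR (true :: s) = 1 + SR s.
Proof. by rewrite SR_cons. Qed.

Lemma SR_false s : SR (false :: s) = -1 + SR s.
Proof. by rewrite SR_cons /sgn intrN. Qed.

Lemma SR_cat a b : SR (a ++ b) = SR a + SR b.
Proof. by rewrite /SR big_cat intrD. Qed.

Lemma SR_neg s : SR (map negb s) = - SR s.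
Proof.
elim: s => [|b s IH]; first by rewrite SR_nil oppr0.
by case: b; rewrite /= ?SR_true ?SR_false IH; ring.
Qed.

Lemma sum1 n : \sum_(s <- allseqs n) (1 : R) = 2 ^+ n.
Proof.
elim: n => [|n IH]; first by rewrite /= big_cons big_nil addr0 expr0.
by rewrite big_allseqsS /= IH exprS; ring.
Qed.

Lemma mom2 n x : \sum_(s <- allseqs n) (x + SR s) ^+ 2 = 2 ^+ n * (x ^+ 2 + n%:R).
Proof.
elim: n x => [|n IH] x; first by rewrite /= big_cons big_nil addr0 SR_nil expr0; ring.
rewrite big_allseqsS /=.
under eq_bigr do rewrite SR_true addrA.
under [X in _ + X = _]eq_bigr do rewrite SR_false addrA.
rewrite !IH (exprS 2 n) -addn1 natrD; ring.
Qed.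

Lemma mom4 n x : \sum_(s <- allseqs n) (x + SR s) ^+ 4 =
  2 ^+ n * (x ^+ 4 + 6 * x ^+ 2 * n%:R + 3 * n%:R ^+ 2 - 2 * n%:R).
Proof.
elim: n x => [|n IH] x; first by rewrite /= big_cons big_nil addr0 SR_nil expr0; ring.
rewrite big_allseqsS /=.
under eq_bigr do rewrite SR_true addrA.
under [X in _ + X = _]eq_bigr do rewrite SR_false addrA.
rewrite !IH (exprS 2 n) -addn1 natrD; ring.
Qed.

Fixpoint hit (l x : R) (s : seq bool) : bool :=
  (l <= `|x|) || (if s is b :: s' then hit l (x + (sgn b)%:~R) s' else false).

Lemma hitE l x s : ~~ hit l x s -> forall k, `|x + SR (take k s)| < l.
Proof.
elim: s x => [|b s IH] x /=.
  by rewrite orbF -ltNge => h k; rewrite SR_nil addr0.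
rewrite negb_or -ltNge => /andP [h1 h2] [|k] /=; first by rewrite SR_nil addr0.
by rewrite SR_cons addrA; apply: IH.
Qed.

Lemma sq_le (l x : R) : 0 <= l -> l <= `|x| -> l ^+ 2 <= x ^+ 2.
Proof. move=> h1 h2; rewrite -[x ^+ 2]real_normK ?num_real //; have := normr_ge0 x; nra. Qed.

Lemma kolm n (l x : R) : 0 <= l ->
  l ^+ 2 * \sum_(s <- allseqs n) (hit l x s)%:R <=
  \sum_(s <- allseqs n) (x + SR s) ^+ 2 * (hit l x s)%:R.
Proof.
move=> l0; elim: n x => [|n IH] x.
  rewrite /= big_cons big_nil big_cons big_nil /= !addr0 orbF SR_nil addr0.
  case h: (l <= `|x|); rewrite ?mulr0 // !mulr1.
  by apply: sq_le; rewrite ?h.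
case h: (l <= `|x|).
  have ht : forall s, hit l x s by case=> [|b s] /=; rewrite h.
  under eq_bigr do rewrite ht mulr1n.
  under [X in _ <= X]eq_bigr do rewrite ht mulr1n mulr1.
  rewrite sum1 mom2 mulrC ler_pM2l ?exprn_gt0 //.
  have : l ^+ 2 <= x ^+ 2 by apply: sq_le; rewrite ?h.
  have : 0 <= (n.+1)%:R :> R by [].
  lra.
rewrite !big_allseqsS /= h /= mulrDr; apply: lerD.
  under eq_bigr do rewrite /sgn.
  under [X in _ <= X]eq_bigr do rewrite SR_true addrA /sgn.
  exact: IH.
under eq_bigr do rewrite /sgn.
under [X in _ <= X]eq_bigr do rewrite SR_false addrA /sgn.
exact: IH.
Qed.

End Walk.


Section Est.
Variable R : realType.

Lemma cntR n P : (cnt n P)%:R = \sum_(s <- allseqs n) (P s)%:R :> R.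
Proof. by rewrite /cnt natr_sum. Qed.

Lemma mom2' n : \sum_(s <- allseqs n) (SR R s) ^+ 2 = 2 ^+ n * n%:R.
Proof.
have := mom2 n (0 : R); under eq_bigr do rewrite add0r.
by move=> ->; rewrite expr0n /= add0r.
Qed.

Lemma mom4' n : \sum_(s <- allseqs n) (SR R s) ^+ 4 =
  2 ^+ n * (3 * n%:R ^+ 2 - 2 * n%:R).
Proof.
have := mom4 n (0 : R); under eq_bigr do rewrite add0r.
move=> ->; congr (_ * _); rewrite expr0n /=; ring.
Qed.

Lemma hit_bound n (l : R) : 0 <= l ->
  l ^+ 2 * (cnt n (hit l 0))%:R <= 2 ^+ n * n%:R.
Proof.
move=> l0; rewrite cntR; apply: le_trans (kolm n 0 l0) _.
rewrite -mom2'; apply: ler_sum => s _; rewrite add0r.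
by case: (hit l 0 s); rewrite ?mulr1 ?mulr0 ?sqr_ge0.
Qed.

Lemma pz n (t : R) : (0 < n)%N -> 0 <= t -> t ^+ 2 <= n%:R / 4 ->
  (3 / 16 * 2 ^+ n : R) <= \sum_(s <- allseqs n) (t <= `|SR R s|)%R%:R.
Proof.
move=> n0 t0 tn.
have N0 : 0 < n%:R :> R by rewrite ltr0n.
set z : R := (8 * n%:R)^-1.
have z0 : 0 <= z by rewrite /z invr_ge0; lra.
have pw : forall y : R, y ^+ 2 <= t ^+ 2 * 1 + z * y ^+ 4 + 2 * n%:R * (t <= `|y|)%R%:R.
  move=> y; case h: (t <= `|y|).
    have e : z * y ^+ 4 + 2 * n%:R - y ^+ 2 = (y ^+ 2 - 4 * n%:R) ^+ 2 / (8 * n%:R).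
      by rewrite /z; field; lra.
    have : 0 <= (y ^+ 2 - 4 * n%:R) ^+ 2 / (8 * n%:R) by apply: divr_ge0; [apply: sqr_ge0| lra].
    have : 0 <= t ^+ 2 by apply: sqr_ge0.
    rewrite mulr1n; lra.
  have hy : y ^+ 2 <= t ^+ 2.
    move/negbT: h; rewrite -ltNge => h.
    rewrite -[y ^+ 2]real_normK ?num_real //; have := normr_ge0 y; nra.
  have : 0 <= z * y ^+ 4 by apply: mulr_ge0 => //; rewrite exprn_even_ge0.
  rewrite mulr0 addr0; lra.
have := @ler_sum _ _ (allseqs n) xpredT _ _ (fun s _ => pw (SR R s)).
rewrite !big_split /= -!mulr_sumr mom2' mom4' sum1.
set E := \sum_(s <- allseqs n) _.
set P : R := 2 ^+ n.
have P0 : 0 < P by rewrite /P exprn_gt0.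
have e2 : z * (P * (3 * n%:R ^+ 2 - 2 * n%:R)) = P * (3 * n%:R - 2) / 8.
  by rewrite /z; field; lra.
rewrite e2 => H.
have h1 : t ^+ 2 * P <= n%:R / 4 * P by rewrite ler_pM2r.
have h2 : 0 <= n%:R * (E - 3 / 16 * P) by nra.
have : 0 <= E - 3 / 16 * P.
  by rewrite -(pmulr_rge0 _ N0).
lra.
Qed.

End Est.


Section Est2.
Variable R : realType.

Lemma sym n (t : R) : 0 < t ->
  \sum_(s <- allseqs n) (t <= `|SR R s|)%R%:R =
  2 * \sum_(s <- allseqs n) (t <= SR R s)%R%:R :> R.
Proof.
move=> t0.
have -> : \sum_(s <- allseqs n) (t <= `|SR R s|)%R%:R =
   \sum_(s <- allseqs n) ((t <= SR R s)%R%:R + (t <= - SR R s)%R%:R) :> R.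
  apply: eq_bigr => s _; rewrite ler_normr.
  case h1: (t <= SR R s)%R; case h2: (t <= - SR R s)%R; rewrite /= ?addr0 ?add0r //.
  by exfalso; move: h1 h2 => /idP h1 /idP h2; lra.
rewrite big_split /=.
rewrite [X in _ + X](big_allseqs_neg _ n (fun s => (t <= - SR R s)%R%:R)) /=.
under [X in _ + X]eq_bigr do rewrite SR_neg opprK.
ring.
Qed.

Definition good (t l : R) (s : seq bool) : bool := (t <= SR R s) && ~~ hit l 0 s.

Lemma good_cnt n (t l : R) : (0 < n)%N -> 0 < t -> t ^+ 2 <= n%:R / 4 -> 0 < l ->
  400 * n%:R <= l ^+ 2 -> 73 / 800 * 2 ^+ n <= (cnt n (good t l))%:R :> R.
Proof.
move=> n0 t0 tn l0 ln.
have A := pz n0 (ltW t0) tn; rewrite sym // in A.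
have B := hit_bound n (ltW l0).
have N0 : 0 < n%:R :> R by rewrite ltr0n.
have P0 : 0 < 2 ^+ n :> R by rewrite exprn_gt0.
set H := (cnt n (hit l 0))%:R in B.
have H0 : 0 <= H by rewrite /H ler0n.
have HB : H <= 2 ^+ n / 400.
  have : 400 * n%:R * H <= 2 ^+ n * n%:R by apply: le_trans B; apply: ler_wpM2r.
  nra.
have : \sum_(s <- allseqs n) (t <= SR R s)%R%:R - H <= (cnt n (good t l))%:R.
  rewrite /H !cntR -sumrB; apply: ler_sum => s _; rewrite /good.
  by case: (t <= SR R s)%R; case: (hit l 0 s) => /=; lra.
lra.
Qed.

End Est2.


Lemma chi_pre_g w s j : size s = w ->
  chi_pre (gseq w s) j = \sum_(x <- take j s) sgn x.
Proof.
move=> hs; rewrite /chi_pre (big_nth false) big_mkord.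
rewrite (big_ord_widen_cond w xpredT (fun i => sgn (nth false (take j s) i))); last first.
  by rewrite size_take; case: ifP => //; rewrite hs // => /ltnW.
apply: eq_big => i.
  rewrite /= size_take hs; case: ifP => h; first by [].
  by rewrite ltn_ord; apply: leq_trans (ltn_ord i) _; rewrite leqNgt h.
by move=> hij; rewrite ffunE nth_take.
Qed.

Section Final.
Variable R : realType.

Definition Pm (m : R) (s : seq bool) := forall j, - m < SR R (take j s) /\ - m < SR R (drop j s).

Lemma Pm_cat m a b : Pm m a -> Pm m b -> 0 <= SR R a -> 0 <= SR R b -> Pm m (a ++ b).
Proof.
move=> ha hb a0 b0 j; rewrite take_cat drop_cat.
case: ifP => _; rewrite ?SR_cat.
  by have [h1 h2] := ha j; split => //; lra.
by have [h1 h2] := hb (j - size a)%N; split => //; lra.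
Qed.

Lemma SR_nseq r : SR R (nseq r true) = r%:R.
Proof. by elim: r => [|r IH]; rewrite ?SR_nil //= SR_true IH mulrS. Qed.

Lemma Pm_nseq m r : 0 < m -> Pm m (nseq r true).
Proof.
move=> m0 j; rewrite drop_nseq SR_nseq; split; last by have := ler0n R (r - j)%N; lra.
case: (leqP j r) => h; first by rewrite take_nseq // SR_nseq; have := ler0n R j; lra.
by rewrite take_oversize ?size_nseq ?SR_nseq; [have := ler0n R r; lra | apply: ltnW].
Qed.

Definition goodL L (t l : R) s := (size s == L) && good t l s.

Fixpoint goodk L (t l : R) k s :=
  if k is k'.+1 then goodL L t l (take L s) && goodk L t l k' (drop L s) else s == [::].

Lemma cnt_size n P : cnt n P = cnt n (fun s => (size s == n) && P s).
Proof.
by apply: eq_big_seq => s; rewrite mem_allseqs => /eqP ->; rewrite eqxx.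
Qed.

Lemma goodk_cnt L (t l : R) k : (cnt L (goodL L t l) ^ k <= cnt (k * L) (goodk L t l k))%N.
Proof.
elim: k => [|k IH]; first by rewrite expn0 /cnt /= big_cons big_nil.
rewrite expnS; apply: leq_trans (leq_mul (leqnn _) IH) _.
apply: cnt_prod; first by rewrite mulSn.
move=> a b ha hb /=; move: (ha) => /andP [/eqP sa _].
by rewrite take_size_cat // drop_size_cat // ha.
Qed.

Lemma goodL_prop L (t l : R) b : 0 < l -> goodL L t l b ->
  [/\ Pm (2 * l) b, t <= SR R b & size b = L].
Proof.
move=> l0 /andP [/eqP sb /andP [tb hb]]; split => //.
have H := hitE hb.
have Hb : `|SR R b| < l by have := H (size b); rewrite take_size add0r.
move=> j; have Hj := H j; rewrite add0r in Hj.
have e : SR R (drop j b) = SR R b - SR R (take j b).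
  by rewrite -{2}(cat_take_drop j b) SR_cat; ring.
rewrite e; move: Hb Hj; rewrite !ltr_norml => /andP [h1 h2] /andP [h3 h4].
split; lra.
Qed.

Lemma goodk_prop L (t l : R) k b : 0 < l -> 0 <= t -> goodk L t l k b ->
  [/\ Pm (2 * l) b, k%:R * t <= SR R b & size b = (k * L)%N].
Proof.
move=> l0 t0; elim: k b => [|k IH] b /=.
  move=> /eqP ->; split => //; last by rewrite mul0r SR_nil.
  by move=> j; rewrite /= SR_nil; split; lra.
move=> /andP [ha hb].
have [P1 T1 S1] := goodL_prop l0 ha.
have [P2 T2 S2] := IH _ hb.
have kt := mulr_ge0 (ler0n R k) t0.
rewrite -(cat_take_drop L b); split.
- apply: Pm_cat => //; lra.
- rewrite SR_cat mulrS; lra.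
- by rewrite size_cat S1 S2 mulSn.
Qed.

End Final.


Lemma num1 (R : realType) (a b w L : R) : 0 <= a -> 0 <= b -> a ^+ 2 = w -> b ^+ 2 = L ->
  w <= 800 * L -> 5 * a <= 200 * b.
Proof.
move=> a0 b0 ea eb h.
have L0 : 0 <= L by rewrite -eb sqr_ge0.
have h2 : (5 * a) ^+ 2 <= (200 * b) ^+ 2 by rewrite !exprMn ea eb !expr2; lra.
by move: h2; rewrite ler_pXn2r // nnegrE; lra.
Qed.

Lemma num2 (R : realType) (a b x r : R) : 5 * a <= 200 * b -> 0 <= r ->
  400 * (b / 2) <= x -> 5 * a <= r + x.
Proof. lra. Qed.

Lemma num3 (R : realType) (l y : R) : - (2 * l) < y -> - (2 * l) < y.
Proof. by []. Qed.

Lemma key (R : realType) w L r b : w = (r + 400 * L)%N -> (0 < L)%N -> (r < 400)%N ->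
  goodk L (Num.sqrt (L%:R : R) / 2) (Num.sqrt (w%:R : R)) 400 b ->
  x_promoting R (gseq w (nseq r true ++ b)).
Proof.
move=> hwL L1 r4 hb.
set t : R := Num.sqrt (L%:R : R) / 2.
set l : R := Num.sqrt (w%:R : R).
have LR : 0 < L%:R :> R by rewrite ltr0n.
have wR : 0 < w%:R :> R by rewrite ltr0n hwL; lia.
have sL := sqr_sqrtr (ltW LR).
have sw := sqr_sqrtr (ltW wR).
have sL0 : 0 < Num.sqrt (L%:R : R) by rewrite sqrtr_gt0.
have l0 : 0 < l by rewrite /l sqrtr_gt0.
have t0 : 0 < t by rewrite /t; lra.
have [Pb Tb Sb] := goodk_prop l0 (ltW t0) hb.
set s := nseq r true ++ b.
have ss : size s = w by rewrite size_cat size_nseq Sb hwL mulnC.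
have Ps : Pm (2 * l) s.
  apply: Pm_cat => //; first by apply: Pm_nseq; lra.
    by rewrite SR_nseq ler0n.
  lra.
have chiE : forall j, (chi_pre (gseq w s) j)%:~R = SR R (take j s).
  by move=> j; rewrite chi_pre_g.
rewrite /x_promoting; apply/andP; split.
  rewrite /chi chiE take_oversize ?ss // /s SR_cat SR_nseq.
  have hw8 : w%:R <= 800 * L%:R :> R.
    have -> : 800 * L%:R = (800 * L)%N%:R :> R by rewrite natrM.
    by rewrite ler_nat hwL; lia.
  have := ler0n R r.
  have : 5 * l <= 200 * Num.sqrt (L%:R : R).
    exact: num1 (ltW l0) (ltW sL0) sw sL hw8.
  rewrite /t in Tb; move=> h1 h2; exact: (num2 h1 h2 Tb).
apply/forallP => j; apply/implyP => j0; apply/andP; split.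
  by rewrite chiE; have [h _] := Ps j; rewrite -/l; lra.
rewrite /chi_suf intrB /chi !chiE take_oversize ?ss //.
rewrite -{1}(cat_take_drop (w - j) s) SR_cat.
have [_ h] := Ps (w - j)%N; rewrite -/l; lra.
Qed.

Unset Implicit Arguments.

Lemma num4 (R : realType) (c a X Y r400 cnt : R) :
  0 < c -> 0 < X -> 0 <= Y -> Y <= r400 -> c * r400 = a -> a * X <= cnt ->
  c * (Y * X) <= cnt.
Proof.
move=> c0 X0 Y0 Yr e h.
have h1 : c * (Y * X) <= c * (r400 * X) by rewrite ler_pM2l // ler_pM2r.
by apply: le_trans h1 _; rewrite mulrA e.
Qed.

Theorem lemma1 (R : realType) :
  exists c : R, 0 < c /\
    exists w0 : nat, forall w : nat, (w0 <= w)%N -> c <= prob_x_promoting R w.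
Proof.
exists ((73 / 1600) ^+ 400); split; first by apply: exprn_gt0; lra.
exists 400%N => w hw.
set L := (w %/ 400)%N; set r := (w %% 400)%N.
have L1 : (0 < L)%N by rewrite divn_gt0.
have r4 : (r < 400)%N by rewrite ltn_pmod.
have hwL : w = (r + 400 * L)%N by rewrite /r /L {1}(divn_eq w 400) addnC mulnC.
set t : R := Num.sqrt (L%:R : R) / 2.
set l : R := Num.sqrt (w%:R : R).
have LR : 0 < L%:R :> R by rewrite ltr0n.
have wR : 0 < w%:R :> R by rewrite ltr0n; lia.
have sL := sqr_sqrtr (ltW LR).
have sw := sqr_sqrtr (ltW wR).
have sL0 : 0 < Num.sqrt (L%:R : R) by rewrite sqrtr_gt0.
have l0 : 0 < l by rewrite /l sqrtr_gt0.
have t0 : 0 < t by rewrite /t; lra.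
have tn : t ^+ 2 <= L%:R / 4.
  have -> : t ^+ 2 = Num.sqrt (L%:R : R) ^+ 2 / 4 by rewrite /t; field.
  by rewrite sL.
have ln : 400 * L%:R <= l ^+ 2.
  rewrite /l sw.
  have -> : 400 * L%:R = (400 * L)%N%:R :> R by rewrite natrM.
  by rewrite ler_nat hwL; lia.
have GC := good_cnt L1 t0 tn l0 ln.
rewrite cnt_size -/(goodL L t l) in GC.
have KC := goodk_cnt L t l 400.
have PC : (1 * cnt (400 * L) (goodk L t l 400) <= cnt w (fun s => x_promoting R (gseq w s)))%N.
  apply: leq_trans (cnt_prod (P1 := pred1 (nseq r true)) hwL _).
    apply: leq_mul => //.
    rewrite /cnt (big_rem (nseq r true)) ?mem_allseqs ?size_nseq //= eqxx.
    exact: leq_addr.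
  move=> a b /eqP -> hb; exact: key hwL L1 r4 hb.
rewrite mul1n in PC.
rewrite /prob_x_promoting card_bridge.
set cw := cnt w _ in PC *.
set cL := cnt L _ in GC KC.
have X0 : 0 < (2 ^+ L : R) ^+ 400 by rewrite !exprn_gt0.
have H1 : (73 / 800) ^+ 400 * (2 ^+ L : R) ^+ 400 <= cw%:R.
  rewrite -exprMn.
  apply: le_trans (_ : cL%:R ^+ 400 <= _).
    rewrite lerXn2r // nnegrE; first by apply: mulr_ge0; [lra | apply: exprn_ge0].
    exact: ler0n.
  by rewrite -natrX ler_nat; apply: leq_trans KC PC.
rewrite natrX ler_pdivlMr ?exprn_gt0 //.
rewrite hwL exprD mulnC exprM.
apply: (@num4 _ _ ((73 / 800) ^+ 400) _ _ (2 ^+ 400)) => //.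
- by apply: exprn_gt0; lra.
- exact: exprn_ge0.
- by apply: ler_weXn2l => //; [lra | apply: ltnW].
- by rewrite -exprMn; congr (_ ^+ _); field.
Qed.
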